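(* Let $(G,H,\mathsf{low},\mathsf{up})$ be an instance of $\textsc{Hom}_<^\star$ where $H$ is a $k$-shifted clique with $k\ge 2$ and segments $V_1<\dots<V_k$ as in the definition. Let $R=V_k=\{v_p,\dots,v_h\}$ and $L=V(H)\setminus R$. Suppose there exists a solution $\phi:G\to H$ and let $X=\phi^{-1}(R)$. Define $\mathsf{low}',\mathsf{up}':X\to\{p,\dots,h\}$ by $\mathsf{low}'(u)=\max(\mathsf{low}(u),p)$ and $\mathsf{up}'(u)=\mathsf{up}(u)$, and let $f$ be a minimum solution of the instance $(G[X],H[R],\mathsf{low}',\mathsf{up}')$ of $\textsc{Hom}_<^\star$. Then the map $\phi':V(G)\to V(H)$ given by $\phi'(u)=f(u)$ for $u\in X$ and $\phi'(u)=\phi(u)$ for $u\notin X$ is a solution of the original instance $(G,H,\mathsf{low},\mathsf{up})$.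
   Context: An ordered graph is a (simple) graph whose vertex set is equipped with a total order $\le$; induced subgraphs inherit the order. For ordered graphs $G,H$, an ordered homomorphism from $G$ to $H$ is a map $f:V(G)\to V(H)$ such that (1) $uv\in E(G)$ implies $f(u)f(v)\in E(H)$, and (2) $u\le v$ implies $f(u)\le f(v)$. The vertices of $H$ are $v_1<\dots<v_h$, identified with indices $1,\dots,h$. A segment is a set of vertices consecutive in the order. $H$ is a $k$-shifted clique if $V(H)$ can be partitioned into segments $V_1,\dots,V_k$ with $V_i<V_{i+1}$ for $i\in[k-1]$, each inducing a clique, such that for every $i>1$ and all $u,u'\in V_i$ with $u<u'$ we have $N(u')\cap\bigcup_{j<i}V_j\subseteq N(u)\cap\bigcup_{j<i}V_j$. An instance of $\textsc{Hom}_<^\star$ consists of ordered graphs $G,H$ and functions $\mathsf{low},\mathsf{up}$ from $V(G)$ to indices of vertices of $H$; a solution is an ordered homomorphism $f:G\to H$ with $\mathsf{low}(v)\le f(v)\le\mathsf{up}(v)$ for all $v$. A solution $f$ is minimum if $f(v)\le f'(v)$ for every solution $f'$ and every vertex $v$. *)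

(* Defs.v *)
From mathcomp Require Import all_boot.
Set Implicit Arguments. Unset Strict Implicit. Unset Printing Implicit Defensive.

(* An ordered graph on n vertices: vertex set 'I_n = {0,...,n-1}, totally
   ordered by the natural order of indices; simple = symmetric irreflexive. *)
Record ograph := OGraph {
  nv : nat;
  adj : rel 'I_nv;
  adj_sym : symmetric adj;
  adj_irr : irreflexive adj }.

(* Solutions of the instance (G[S], H[T], low, up) of Hom_<^*, where S, T
   are vertex subsets inducing subgraphs with the inherited order.  A map
   G[S] -> H[T] is represented by f : 'I_(nv G) -> 'I_(nv H) whose values on
   S lie in T (values outside S are irrelevant). low/up give vertex indices
   of H (0-based). *)
Definition solution_on (G H : ograph) (S : {set 'I_(nv G)}) (T : {set 'I_(nv H)})
    (low up : 'I_(nv G) -> nat) (f : 'I_(nv G) -> 'I_(nv H)) : Prop :=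
  [/\ forall u, u \in S -> f u \in T,
      forall u v, u \in S -> v \in S -> adj u v -> adj (f u) (f v),
      forall u v, u \in S -> v \in S -> (u <= v)%N -> (f u <= f v)%N
    & forall u, u \in S -> (low u <= f u)%N && (f u <= up u)%N].

Definition solution (G H : ograph) (low up : 'I_(nv G) -> nat)
    (f : 'I_(nv G) -> 'I_(nv H)) : Prop :=
  solution_on setT setT low up f.

Definition min_solution_on (G H : ograph) (S : {set 'I_(nv G)}) (T : {set 'I_(nv H)})
    (low up : 'I_(nv G) -> nat) (f : 'I_(nv G) -> 'I_(nv H)) : Prop :=
  solution_on S T low up f /\
  forall f', solution_on S T low up f' -> forall u, u \in S -> (f u <= f' u)%N.

(* Segment V_i (1 <= i <= k) of a partition given by boundaries
   b 0 = 0 < b 1 < ... < b k = h: V_i = {v | b (i-1) <= v < b i}. *)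
Definition in_seg (b : nat -> nat) (i v : nat) : bool := (b i.-1 <= v < b i)%N.

Definition shifted_clique_seg (H : ograph) (k : nat) (b : nat -> nat) : Prop :=
  [/\ b 0 = 0, b k = nv H,
      (forall i, i < k -> b i < b i.+1)%N,
      (forall i (u v : 'I_(nv H)), (1 <= i <= k)%N -> in_seg b i u -> in_seg b i v ->
         u != v -> adj u v)
    &
      (forall i (u u' w : 'I_(nv H)), (1 < i <= k)%N -> in_seg b i u -> in_seg b i u' ->
         (u < u')%N -> (w < b i.-1)%N -> adj u' w -> adj u w)].

(* Main.v *)
Require Import Defs.
From mathcomp Require Import all_boot.

Theorem lemma2 (G H : ograph) (low up : 'I_(nv G) -> nat) (k : nat) (b : nat -> nat)
  (hk : (2 <= k)%N) (hH : shifted_clique_seg H k b)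
  (phi : 'I_(nv G) -> 'I_(nv H)) (hphi : solution low up phi)
  (f : 'I_(nv G) -> 'I_(nv H)) :
  let p := b k.-1 in
  let R := [set v : 'I_(nv H) | (p <= v)%N] in
  let X := [set u : 'I_(nv G) | phi u \in R] in
  let low' := fun u => maxn (low u) p in
  min_solution_on X R low' up f ->
  solution low up (fun u => if u \in X then f u else phi u).
Proof.
move=> p R X low' [[fR fadj fmon fbd] fmin].
case: hH => hb0 hbk hinc hcl hsh.
case: hphi => _ padj pmon pbd.
have inX u : (u \in X) = (p <= phi u)%N by rewrite !inE.
have inR v : (v \in R) = (p <= v)%N by rewrite !inE.
have phiX : solution_on X R low' up phi.
  split.
  - by move=> u; rewrite inX inR.
  - by move=> u v _ _; apply: padj; rewrite inE.
  - by move=> u v _ _; apply: pmon; rewrite inE.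
  - move=> u; rewrite inX => hu; have /andP[h1 h2] := pbd u (in_setT u).
    by rewrite /low' geq_max h1 hu h2.
have fle u : u \in X -> (f u <= phi u)%N by move=> hu; exact: fmin phi phiX u hu.
have key u v : u \in X -> v \notin X -> adj (phi u) (phi v) -> adj (f u) (phi v).
  move=> hu hv ha.
  have hfu : (p <= f u)%N by rewrite -inR; apply: fR.
  have := fle u hu; rewrite leq_eqVlt => /orP[/eqP e|lt].
    by move: e ha => /val_inj ->.
  have hk1 : (1 < k <= k)%N by rewrite leqnn andbT.
  apply: (hsh k (f u) (phi u) (phi v) hk1 _ _ lt).
  - by rewrite /in_seg hfu hbk ltn_ord.
  - by rewrite /in_seg -/p -inX hu hbk ltn_ord.
  - by rewrite -/p ltnNge -inX.
  - exact: ha.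
split.
- by move=> u _; rewrite in_setT.
- move=> u v _ _ uv.
  case: ifP => hu; case: ifP => hv.
  + by apply: fadj.
  + apply: key; [by [] | by rewrite hv |].
    by apply: padj; rewrite ?inE.
  + rewrite adj_sym; apply: key; [by rewrite hv| by rewrite hu |].
    by rewrite adj_sym; apply: padj; rewrite ?inE.
  + by apply: padj; rewrite ?inE.
- move=> u v _ _ uv.
  case: ifP => hu; case: ifP => hv.
  + by apply: fmon.
  + have := pmon u v (in_setT u) (in_setT v) uv.
    move: hu hv; rewrite !inX => hu /negbT; rewrite -ltnNge => hv h.
    by move: (leq_trans hu h); rewrite leqNgt hv.
  + move: hu; rewrite inX => /negbT; rewrite -ltnNge => hu.
    apply: ltnW; apply: (leq_trans hu); rewrite -inR; exact: fR.
  + by apply: pmon; rewrite ?inE.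
- move=> u _; case: ifP => hu.
  + have /andP[h1 h2] := fbd u hu.
    by rewrite h2 andbT; apply: leq_trans h1; rewrite /low' leq_maxl.
  + exact: pbd (in_setT u).
Qed.
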